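(* Let $p\ge 1$ and $q\ge 2$ be integers with $q-1\le p\le \frac12 q(q-1)$. Then there is a Zariski open, dense subset $\mathcal{O}$ of $\mathcal{V}(p,q)=\Lambda^2(\mathbb{R}^q)^*\otimes\mathbb{R}^p$ such that for every $\rho\in\mathcal{O}\cap V^o_{p,q}$, the simply connected 2-step nilpotent Lie group $N_\rho$ satisfies the partial automatic continuity. Moreover, for every $\rho\in\mathcal{O}\cap V^o_{p,q}$ and every abstract (not necessarily continuous) group automorphism $F$ of $N_\rho$, there exist a central automorphism $\mu$ of $N_\rho$ and a Lie group automorphism $\overline{F}$ of $N_\rho$ such that $F=\mu\circ\overline{F}$.
   Context: Every $\rho\in\mathcal{V}(p,q)=\Lambda^2(\mathbb{R}^q)^*\otimes\mathbb{R}^p$ (a linear map $\Lambda^2\mathbb{R}^q\to\mathbb{R}^p$) defines a Lie bracket $[\cdot,\cdot]_\rho$ on $\mathbb{R}^q\oplus\mathbb{R}^p$ by $[x,y]_\rho=\rho(x\wedge y)$ for $x,y\in\mathbb{R}^q$ and all brackets involving $\mathbb{R}^p$ equal to $0$; write $\mathcal{N}_\rho=(\mathbb{R}^q\oplus\mathbb{R}^p,[\cdot,\cdot]_\rho)$. Let $V^o_{p,q}\subseteq\mathcal{V}(p,q)$ be the (Zariski open, dense) set of surjective $\rho$, i.e. those for which $\mathcal{N}_\rho$ is 2-step nilpotent with $[\mathcal{N}_\rho,\mathcal{N}_\rho]=\mathbb{R}^p$ of dimension $p$ (''type $(p,q)$''). $N_\rho$ denotes the simply connected Lie group with Lie algebra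 $\mathcal{N}_\rho$. For a simply connected nilpotent Lie group $N$ with Lie algebra $\mathcal{N}$ (so $\exp:\mathcal{N}\to N$ is a diffeomorphism): a central automorphism of $N$ is an abstract group automorphism $F$ with $x^{-1}F(x)$ in the center of $N$ for all $x$; a Lie group automorphism is a continuous (hence smooth) automorphism. Field automorphisms: if $\mathcal{N}=\mathcal{N}_1\oplus\cdots\oplus\mathcal{N}_k$ is a direct sum of ideals, for each $\mathcal{N}_i$ that is the realification of a complex Lie algebra choose a $\mathbb{C}$-basis $e_1,\dots,e_m$ of $\mathcal{N}_i$ and a field automorphism $\varphi$ of $\mathbb{C}$ fixing the structure constants in this basis and set $\sigma_i(\sum x_le_l)=\sum\varphi(x_l)e_l$; otherwise $\sigma_i=\mathrm{id}$. Then $\sigma=\sigma_1\times\cdots\times\sigma_k$ is a field automorphism of $\mathcal{N}$ and $\exp\circ\sigma\circ\exp^{-1}$ is a field automorphism of $N$ (if $\mathcal{N}$ is not such a realification in any way, only the identity arises). $N$ satisfies the partial automatic continuity if every abstract group automorphism $F$ of $N$ can be written $F=\mu\circ\overline{F}\circ\Phi$ with $\mu$ a central automorphism, $\overline{F}$ a Lie group automorphism and $\Phi$ a field automorphism of $N$. *)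

(* Defs.v *)
From HB Require Import structures.
From mathcomp Require Import all_boot all_order all_algebra.
From mathcomp Require Import all_classical all_reals all_analysis.
From mathcomp Require Import Rstruct Rstruct_topology complex.
From Stdlib Require Import Reals.
Set Implicit Arguments. Unset Strict Implicit. Unset Printing Implicit Defensive.
Import Order.TTheory GRing.Theory Num.Theory.
Local Open Scope ring_scope.

Notation RR := Rdefinitions.R.
Notation CC := (Rdefinitions.R)[i].

(* rho in V(p,q) = Lambda^2 (R^q)^* (x) R^p is given by its values
   c i j = rho(e_i /\ e_j) in R^p; these are exactly the NR_alternating
   families c (c j i = - c i j). *)
Definition Vcoef (p q : nat) := 'I_q -> 'I_q -> 'rV[RR]_p.

Definition NR_alternating p q (c : Vcoef p q) : Prop :=
  forall i j, c j i = - c i j.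

Definition rho_wedge p q (c : Vcoef p q) (x y : 'rV[RR]_q) : 'rV[RR]_p :=
  \sum_(i < q) \sum_(j < q) (x 0 i * y 0 j) *: c i j.

(* rho : Lambda^2 R^q -> R^p is surjective (rho in V^o_{p,q}) *)
Definition NR_surjective_rho p q (c : Vcoef p q) : Prop :=
  forall z : 'rV[RR]_p, exists a : 'I_q -> 'I_q -> RR,
    z = \sum_(i < q) \sum_(j < q) a i j *: c i j.

(* polynomial functions in the coordinates c i j 0 k of V(p,q)
   (restrictions to the linear subspace V(p,q) of polynomial functions on the
   ambient coordinate space, i.e. exactly the polynomial functions on V(p,q)) *)
Inductive polyfun (p q : nat) : (Vcoef p q -> RR) -> Prop :=
| pf_const (a : RR) : polyfun (fun _ => a)
| pf_coord (i j : 'I_q) (k : 'I_p) : polyfun (fun c => c i j 0 k)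
| pf_add f g : polyfun f -> polyfun g -> polyfun (fun c => f c + g c)
| pf_mul f g : polyfun f -> polyfun g -> polyfun (fun c => f c * g c).

(* a subset of V(p,q) (only its trace on NR_alternating c matters) *)
Definition NR_zariski_closed p q (Z : Vcoef p q -> Prop) : Prop :=
  exists S : (Vcoef p q -> RR) -> Prop,
    (forall f, S f -> polyfun f) /\
    forall c, NR_alternating c -> (Z c <-> forall f, S f -> f c = 0).

Definition NR_zariski_open p q (O : Vcoef p q -> Prop) : Prop :=
  NR_zariski_closed (fun c => ~ O c).

Definition NR_zariski_dense p q (O : Vcoef p q -> Prop) : Prop :=
  forall Z : Vcoef p q -> Prop, NR_zariski_closed Z ->
    (forall c, NR_alternating c -> O c -> Z c) ->
    forall c, NR_alternating c -> Z c.

Notation Nsp p q := ('rV[RR]_q * 'rV[RR]_p)%type.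

Definition lie p q (c : Vcoef p q) (X Y : Nsp p q) : Nsp p q :=
  (0, rho_wedge c X.1 Y.1).

(* The simply connected group N_rho, identified with its Lie algebra via exp
   (Baker-Campbell-Hausdorff for 2-step nilpotent algebras):
   exp X * exp Y = exp (X + Y + 1/2 [X,Y]). *)
Definition gmul p q (c : Vcoef p q) (X Y : Nsp p q) : Nsp p q :=
  (X.1 + Y.1, X.2 + Y.2 + 2^-1 *: rho_wedge c X.1 Y.1).
Definition ginv p q (X : Nsp p q) : Nsp p q := (- X.1, - X.2).

Definition NR_group_aut p q (c : Vcoef p q) (F : Nsp p q -> Nsp p q) : Prop :=
  bijective F /\ forall X Y, F (gmul c X Y) = gmul c (F X) (F Y).

Definition in_center p q (c : Vcoef p q) (g : Nsp p q) : Prop :=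
  forall h, gmul c g h = gmul c h g.

Definition NR_central_aut p q (c : Vcoef p q) (F : Nsp p q -> Nsp p q) : Prop :=
  NR_group_aut c F /\ forall X, in_center c (gmul c (ginv X) (F X)).

Definition NR_lie_group_aut p q (c : Vcoef p q) (F : Nsp p q -> Nsp p q) : Prop :=
  NR_group_aut c F /\ continuous F.

Definition is_ideal p q (c : Vcoef p q) (U : Nsp p q -> Prop) : Prop :=
  [/\ U 0, (forall u v, U u -> U v -> U (u + v)),
      (forall (a : RR) u, U u -> U (a *: u)) &
      (forall u Y, U u -> U (lie c u Y))].

(* complex structure J on the ideal U making (U, [,]) the realification of a
   complex Lie algebra *)
Definition complex_structure p q (c : Vcoef p q) (U : Nsp p q -> Prop)
  (J : Nsp p q -> Nsp p q) : Prop :=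
  [/\ (forall u, U u -> U (J u)),
      (forall u, U u -> J (J u) = - u),
      (forall (a : RR) u v, U u -> U v -> J (a *: u + v) = a *: J u + J v) &
      (forall u v, U u -> U v -> lie c (J u) v = J (lie c u v))].

Definition cscale p q (J : Nsp p q -> Nsp p q) (a : CC) (u : Nsp p q) :=
  (complex.Re a : RR) *: u + (complex.Im a : RR) *: J u.

Definition ccomb p q (J : Nsp p q -> Nsp p q) m (a : 'I_m -> CC)
  (e : 'I_m -> Nsp p q) : Nsp p q := \sum_(l < m) cscale J (a l) (e l).

Definition is_C_basis p q (U : Nsp p q -> Prop) (J : Nsp p q -> Nsp p q) m
  (e : 'I_m -> Nsp p q) : Prop :=
  (forall l, U (e l)) /\
  forall u, U u -> exists! a : 'I_m -> CC, u = ccomb J a e.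

Definition field_aut_C (phi : CC -> CC) : Prop :=
  [/\ bijective phi, (forall x y, phi (x + y) = phi x + phi y),
      (forall x y, phi (x * y) = phi x * phi y) & phi 1 = 1].

(* sigma_i on an ideal U : either the identity, or (if U is the realification
   of a complex Lie algebra) conjugation of coordinates by a field
   automorphism phi of C fixing the structure constants in a C-basis *)
Definition field_aut_component p q (c : Vcoef p q) (U : Nsp p q -> Prop)
  (s : Nsp p q -> Nsp p q) : Prop :=
  (forall u, U u -> s u = u) \/
  exists (J : Nsp p q -> Nsp p q) (m : nat) (e : 'I_m -> Nsp p q)
         (cst : 'I_m -> 'I_m -> 'I_m -> CC) (phi : CC -> CC),
    [/\ complex_structure c U J, is_C_basis U J e,
        (forall a b, lie c (e a) (e b) = ccomb J (cst a b) e),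
        field_aut_C phi &
        (forall a b l, phi (cst a b l) = cst a b l)] /\
        (forall a : 'I_m -> CC, s (ccomb J a e) = ccomb J (fun l => phi (a l)) e).


(* field automorphism sigma of the Lie algebra N_rho; since exp is the
   identity in our model of N_rho, exp o sigma o exp^-1 = sigma is then the
   corresponding field automorphism of the group N_rho *)
Definition NR_field_aut p q (c : Vcoef p q) (sigma : Nsp p q -> Nsp p q) : Prop :=
  exists (k : nat) (U : 'I_k -> Nsp p q -> Prop) (s : 'I_k -> Nsp p q -> Nsp p q),
    [/\ (forall i, is_ideal c (U i)),
        (forall X, exists! Xs : 'I_k -> Nsp p q,
            (forall i, U i (Xs i)) /\ X = \sum_(i < k) Xs i),
        (forall i, field_aut_component c (U i) (s i)) &
        (forall Xs : 'I_k -> Nsp p q, (forall i, U i (Xs i)) ->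
            sigma (\sum_(i < k) Xs i) = \sum_(i < k) s i (Xs i))].

Definition NR_partial_automatic_continuity p q (c : Vcoef p q) : Prop :=
  forall F, NR_group_aut c F ->
    exists mu Fb Phi, [/\ NR_central_aut c mu, NR_lie_group_aut c Fb, NR_field_aut c Phi &
                          F = mu \o Fb \o Phi].

(* Main.v *)
Require Import Defs.
From HB Require Import structures.
From mathcomp Require Import all_boot all_order all_algebra.
From mathcomp Require Import all_classical all_reals all_analysis.
From mathcomp Require Import Rstruct Rstruct_topology complex.
From Stdlib Require Import Reals.
From mathcomp Require Import ring lra zify.
Import Order.TTheory GRing.Theory Num.Theory.
Set Implicit Arguments. Unset Strict Implicit. Unset Printing Implicit Defensive.
Local Open Scope ring_scope.
Lemma rhoDl p q (c : Vcoef p q) x1 x2 y :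
  rho_wedge c (x1 + x2) y = rho_wedge c x1 y + rho_wedge c x2 y.
Proof.
rewrite /rho_wedge -big_split; apply: eq_bigr => i _.
rewrite -big_split; apply: eq_bigr => j _.
by rewrite mxE mulrDl scalerDl.
Qed.

Lemma rhoDr p q (c : Vcoef p q) x y1 y2 :
  rho_wedge c x (y1 + y2) = rho_wedge c x y1 + rho_wedge c x y2.
Proof.
rewrite /rho_wedge -big_split; apply: eq_bigr => i _.
rewrite -big_split; apply: eq_bigr => j _.
by rewrite mxE mulrDr scalerDl.
Qed.

Lemma rhoZl p q (c : Vcoef p q) (a : RR) x y :
  rho_wedge c (a *: x) y = a *: rho_wedge c x y.
Proof.
rewrite /rho_wedge scaler_sumr; apply: eq_bigr => i _.
rewrite scaler_sumr; apply: eq_bigr => j _.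
by rewrite mxE scalerA mulrA.
Qed.

Lemma rhoZr p q (c : Vcoef p q) (a : RR) x y :
  rho_wedge c x (a *: y) = a *: rho_wedge c x y.
Proof.
rewrite /rho_wedge scaler_sumr; apply: eq_bigr => i _.
rewrite scaler_sumr; apply: eq_bigr => j _.
by rewrite mxE scalerA mulrCA.
Qed.

Lemma rho0l p q (c : Vcoef p q) y : rho_wedge c 0 y = 0.
Proof. by rewrite -(scale0r 0) rhoZl scale0r. Qed.

Lemma rho0r p q (c : Vcoef p q) y : rho_wedge c y 0 = 0.
Proof. by rewrite -(scale0r 0) rhoZr scale0r. Qed.

Lemma rhoNl p q (c : Vcoef p q) x y : rho_wedge c (- x) y = - rho_wedge c x y.
Proof. by rewrite -scaleN1r rhoZl scaleN1r. Qed.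

Lemma rhoNr p q (c : Vcoef p q) x y : rho_wedge c x (- y) = - rho_wedge c x y.
Proof. by rewrite -scaleN1r rhoZr scaleN1r. Qed.

Lemma rho_anti p q (c : Vcoef p q) : NR_alternating c ->
  forall x y, rho_wedge c y x = - rho_wedge c x y.
Proof.
move=> alt x y; rewrite /rho_wedge exchange_big -sumrN; apply: eq_bigr => i _.
rewrite -sumrN; apply: eq_bigr => j _.
by rewrite alt scalerN mulrC.
Qed.

Lemma rho_xx p q (c : Vcoef p q) : NR_alternating c -> forall x, rho_wedge c x x = 0.
Proof.
move=> alt x; have h := rho_anti alt x x.
have : 2%:R *: rho_wedge c x x = 0 by rewrite scaler_nat mulr2n {1}h addNr.
by move/eqP; rewrite scaler_eq0 pnatr_eq0 /= => /eqP.
Qed.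

Lemma rho_er p q (c : Vcoef p q) x j :
  rho_wedge c x (delta_mx 0 j) = \sum_(a < q) x 0 a *: c a j.
Proof.
rewrite /rho_wedge; apply: eq_bigr => a _.
rewrite (bigD1 j) //= big1 ?addr0; first by rewrite mxE !eqxx mulr1.
by move=> b nb; rewrite mxE (negbTE nb) andbF mulr0 scale0r.
Qed.

Lemma rho_el p q (c : Vcoef p q) y i :
  rho_wedge c (delta_mx 0 i) y = \sum_(b < q) y 0 b *: c i b.
Proof.
rewrite /rho_wedge (bigD1 i) //= [X in _ + X]big1 ?addr0.
  by apply: eq_bigr => b _; rewrite mxE !eqxx mul1r.
move=> a na; apply: big1 => b _; rewrite mxE (negbTE na) mul0r scale0r.
by [].
Qed.
Definition Eqc p q (i0 : 'I_q) (c : Vcoef p q) (ab : 'I_q * 'I_q)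
  (J : option ('I_q * 'I_q * 'I_p)) : RR :=
  match J with
  | None => if ab == (i0, i0) then 1 else 0
  | Some (ij, k) => (if ab.1 == ij.1 then c ab.2 ij.2 0 k else 0)
                   - (if ab.1 == ij.2 then c ij.1 ab.2 0 k else 0)
  end.

Definition Good p q (i0 : 'I_q) (c : Vcoef p q) : Prop :=
  forall v : 'I_q * 'I_q -> RR,
    (forall J, \sum_(ab : 'I_q * 'I_q) v ab * Eqc i0 c ab J = 0) ->
    forall ab, v ab = 0.

Lemma sum_pick q (i : 'I_q) (X : 'I_q -> 'I_q -> RR) :
  \sum_(ab : 'I_q * 'I_q) (if ab.1 == i then X ab.1 ab.2 else 0)
  = \sum_(b < q) X i b.
Proof.
rewrite -(pair_big xpredT xpredT (fun a b => if a == i then X a b else 0)) /=.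
rewrite (bigD1 i) //= [X in _ + X]big1 ?addr0.
  by apply: eq_bigr => b _; rewrite eqxx.
by move=> a na; apply: big1 => b _; rewrite (negbTE na).
Qed.

Lemma sum_if q (i : 'I_q) (t : RR) (X : 'I_q -> RR) :
  \sum_(b < q) (if i == b then t else 0) * X b = t * X i.
Proof.
rewrite (bigD1 i) //= eqxx [X in _ + X]big1 ?addr0 //.
by move=> b nb; rewrite eq_sym (negbTE nb) mul0r.
Qed.

Lemma good_sym p q (i0 : 'I_q) (c : Vcoef p q) : Good i0 c ->
  forall T : 'I_q -> 'rV[RR]_q,
  (forall i j, rho_wedge c (T i) (delta_mx 0 j) = rho_wedge c (delta_mx 0 i) (T j)) ->
  forall a, T a = (T i0 0 i0) *: delta_mx 0 a.
Proof.
move=> G T sym.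
set t := T i0 0 i0.
pose v (ab : 'I_q * 'I_q) := T ab.1 0 ab.2 - (if ab.1 == ab.2 then t else 0).
have v0 : forall ab, v ab = 0.
  apply: G => -[[[i j] k]|] /=.
    under eq_bigr => ab _ do rewrite mulrBr.
    rewrite sumrB.
    have e1 : forall (i0 : 'I_q) (X : 'I_q -> RR), \sum_(ab : 'I_q * 'I_q) v ab * (if ab.1 == i0 then X ab.2 else 0) = \sum_(b < q) v (i0, b) * X b.
      move=> i1 X; rewrite -(sum_pick i1 (fun a b => v (a, b) * X b)).
      apply: eq_bigr => -[a b] _ /=; case: eqP => _; by rewrite ?mulr0.
    rewrite (e1 i (fun b => c b j 0 k)) (e1 j (fun b => c i b 0 k)).
    have h : \sum_(b < q) T i 0 b * c b j 0 k = \sum_(b < q) T j 0 b * c i b 0 k.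
      rewrite [LHS](eq_bigr (fun b => (T i 0 b *: c b j) 0 k)); last by move=> b _; rewrite mxE.
      rewrite [RHS](eq_bigr (fun b => (T j 0 b *: c i b) 0 k)); last by move=> b _; rewrite mxE.
      by have := congr1 (fun M : 'rV[RR]_p => M 0 k) (sym i j); rewrite rho_er rho_el /= !summxE.
    rewrite /v /=.
    under eq_bigr => b _ do rewrite mulrBl.
    under [in X in _ - X]eq_bigr => b _ do rewrite mulrBl.
    rewrite !sumrB h.
    rewrite !sum_if; ring.
  rewrite (bigD1 (i0, i0)) //= big1 ?addr0; last first.
    by move=> ab /negbTE ->; rewrite mulr0.
  by rewrite eqxx mulr1 /v /= eqxx subrr.
move=> a; apply/rowP => b; rewrite !mxE.
have := v0 (a, b); rewrite /v /= => /eqP; rewrite subr_eq0 => /eqP ->.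
rewrite eq_sym; case: eqP => _ /=; by rewrite ?mulr1 ?mulr0.
Qed.
Lemma add0_of q (T : 'rV[RR]_q -> 'rV[RR]_q) :
  (forall x y, T (x + y) = T x + T y) -> T 0 = 0.
Proof.
move=> TD; have := TD 0 0; rewrite addr0 => /eqP.
by rewrite -subr_eq subrr eq_sym => /eqP.
Qed.

Lemma good_scalar p q (i0 : 'I_q) (c : Vcoef p q) : Good i0 c ->
  forall T : 'rV[RR]_q -> 'rV[RR]_q,
  (forall x y, T (x + y) = T x + T y) -> (forall (a : RR) x, T (a *: x) = a *: T x) ->
  (forall x y, rho_wedge c (T x) y = rho_wedge c x (T y)) ->
  exists t : RR, forall x, T x = t *: x.
Proof.
move=> G T TD TZ sym.
have := good_sym G (T := fun i => T (delta_mx 0 i)) (fun i j => sym _ _).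
set t := T _ 0 i0 => h; exists t => x.
rewrite (row_sum_delta x) (big_morph T TD (add0_of TD)) scaler_sumr.
by apply: eq_bigr => a _; rewrite TZ h scalerA mulrC -scalerA.
Qed.

Lemma good_center p q (i0 i1 : 'I_q) (c : Vcoef p q) : Good i0 c -> NR_alternating c ->
  i1 != i0 -> forall u, (forall y, rho_wedge c u y = 0) -> u = 0.
Proof.
move=> G alt n10 u hu.
have [t ht] : exists t : RR, forall x : 'rV[RR]_q, x 0 i0 *: u = t *: x.
  apply: (good_scalar G (T := fun x => x 0 i0 *: u)).
  - by move=> x y; rewrite mxE scalerDl.
  - by move=> a x; rewrite mxE scalerA.
  - by move=> x y; rewrite rhoZl rhoZr hu (rho_anti alt) hu oppr0 !scaler0.
have := ht (delta_mx 0 i1); rewrite mxE eq_sym (negbTE n10) scale0r => /rowP /(_ i1).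
rewrite !mxE !eqxx mulr1 => t0.
by have := ht (delta_mx 0 i0); rewrite mxE !eqxx scale1r -t0 scale0r.
Qed.
Lemma ringhom_id (phi : RR -> RR) :
  (forall x y, phi (x + y) = phi x + phi y) ->
  (forall x y, phi (x * y) = phi x * phi y) -> phi 1 = 1 ->
  forall x, phi x = x.
Proof.
move=> hD hM h1 x.
have p0 : phi 0 = 0.
  have := hD 0 0; rewrite addr0 => /eqP; by rewrite -subr_eq subrr eq_sym => /eqP.
have pN : forall y, phi (- y) = - phi y.
  move=> y; apply/eqP; rewrite -subr_eq0 opprK -hD.
  by rewrite addNr p0.
have pn : forall n : nat, phi n%:R = n%:R.
  elim=> [|n IH]; first by rewrite p0.
  by rewrite -addn1 natrD hD IH h1.
have pz : forall z : int, phi z%:~R = z%:~R.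
  case=> n; first exact: pn.
  by rewrite NegzE mulrNz pN; congr (- _); exact: pn.
have pos : forall y, 0 <= y -> 0 <= phi y.
  move=> y y0; rewrite -(sqr_sqrtr y0) expr2 hM.
  by rewrite -expr2 sqr_ge0.
have mono : forall a b, a <= b -> phi a <= phi b.
  move=> a b ab; rewrite -subr_ge0 -pN -hD; apply: pos; by rewrite subr_ge0.
have bnd : forall n : nat, `|n%:R * (phi x - x)| <= 1.
  move=> n.
  have l1 := floor_le (n%:R * x).
  have l2 := floorD1_gt (n%:R * x).
  have m1 := mono _ _ l1.
  have m2 := mono _ _ (ltW l2).
  rewrite pz hM pn in m1; rewrite pz hM pn in m2.
  rewrite intrD in l2 m2.
  rewrite ler_norml; apply/andP; split; lra.
apply/eqP; rewrite -subr_eq0; apply/negPn/negP => d0.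
have dp : 0 < `|phi x - x| by rewrite normr_gt0.
have := archi_boundP (ltW (eq_ind_r is_true dp (invr_gt0 `|phi x - x|))).
set n := Num.bound _ => hn.
have := bnd n; rewrite normrM ger0_norm ?ler0n //.
have iv : `|phi x - x|^-1 * `|phi x - x| = 1 by rewrite mulVf // gt_eqF.
move: hn iv dp; set a := `|phi x - x|; set i := a^-1 => hn iv dp.
have h2 : 0 < (n%:R - i) * a by rewrite mulr_gt0 // subr_gt0.
move: h2; rewrite mulrBl iv; lra.
Qed.
Lemma scal_inj q (a b : RR) (v : 'rV[RR]_q) : v != 0 -> a *: v = b *: v -> a = b.
Proof.
move=> v0 /eqP; rewrite -subr_eq0 -scalerBl scaler_eq0 (negbTE v0) orbF subr_eq0.
by move/eqP.
Qed.

Lemma half2 (r : RR) : 2^-1 * r + 2^-1 * r = r.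
Proof. lra. Qed.

Lemma half2v p (r : 'rV[RR]_p) : 2^-1 *: r + 2^-1 *: r = r.
Proof. by rewrite -scalerDl (_ : 2^-1 + 2^-1 = 1 :> RR) ?scale1r //; lra. Qed.

Lemma center_iff p q (i0 i1 : 'I_q) (c : Vcoef p q) : Good i0 c -> NR_alternating c ->
  i1 != i0 -> forall X : Nsp p q, in_center c X <-> X.1 = 0.
Proof.
move=> G alt n10 [x z]; split => /=.
  move=> hc; apply: (good_center G alt n10) => y.
  have e : z + 0 + 2^-1 *: rho_wedge c x y = 0 + z + 2^-1 *: rho_wedge c y x.
    by have := hc (y, 0); rewrite /gmul /= => -[].
  rewrite addr0 add0r in e; move/addrI: e => e.
  have : rho_wedge c x y = 2^-1 *: rho_wedge c x y + 2^-1 *: rho_wedge c y x.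
    by rewrite -e half2v.
  by rewrite (rho_anti alt x y) scalerN subrr.
move=> -> [y w]; rewrite /gmul /= rho0l rho0r scaler0 !addr0 add0r.
by rewrite addrC.
Qed.
Lemma add0_of' n m (T : 'rV[RR]_n -> 'rV[RR]_m) :
  (forall x y, T (x + y) = T x + T y) -> T 0 = 0.
Proof.
move=> TD; have := TD 0 0; rewrite addr0 => /eqP.
by rewrite -subr_eq subrr eq_sym => /eqP.
Qed.

Lemma rho_ee p q (c : Vcoef p q) i j :
  rho_wedge c (delta_mx 0 i) (delta_mx 0 j) = c i j.
Proof.
rewrite rho_el (bigD1 j) //= [X in _ + X]big1 ?addr0.
  by rewrite mxE !eqxx scale1r.
by move=> b nb; rewrite mxE (negbTE nb) scale0r.
Qed.

Lemma lin_mx_of n m (f : 'rV[RR]_n -> 'rV[RR]_m) :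
  (forall x y, f (x + y) = f x + f y) -> (forall (a : RR) x, f (a *: x) = a *: f x) ->
  forall x, f x = x *m (\matrix_(i, j) f (delta_mx 0 i) 0 j).
Proof.
move=> fD fZ x.
rewrite mulmx_sum_row {1}(row_sum_delta x) (big_morph f fD (add0_of' fD)).
apply: eq_bigr => i _; rewrite fZ; congr (_ *: _).
by apply/rowP => j; rewrite !mxE.
Qed.
Local Open Scope classical_set_scope.
Lemma mulmx_cont n m (M : 'M[RR]_(n,m)) : continuous (fun x : 'rV[RR]_n => x *m M).
Proof.
move=> x.
have -> : (fun x : 'rV[RR]_n => x *m M) = (fun x => \sum_(i < n) x 0 i *: row i M).
  by apply: funext => y; rewrite mulmx_sum_row.
apply: cvg_big.
  exact: add_continuous.
  exact: nbhs_filter.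
move=> i _; apply: cvgZr_tmp; try exact: nbhs_filter.
exact: (@coord_continuous RR 1 n 0 i x).
Qed.

Lemma pair_cont q p (f : 'rV[RR]_q -> 'rV[RR]_q) (g : 'rV[RR]_p -> 'rV[RR]_p) :
  continuous f -> continuous g -> continuous (fun X : Nsp p q => (f X.1, g X.2)).
Proof.
move=> cf cg x.
have h1 : (f X.1 @[X --> x]) --> f x.1.
  apply: (@continuous_comp _ _ _ fst f); last exact: cf.
  exact: cvg_fst.
have h2 : (g X.2 @[X --> x]) --> g x.2.
  apply: (@continuous_comp _ _ _ snd g); last exact: cg.
  exact: cvg_snd.
exact: (cvg_pair h1 h2).
Qed.
Local Close Scope classical_set_scope.
Lemma aut_decomp p q (i0 i1 : 'I_q) (c : Vcoef p q) : Good i0 c -> NR_alternating c ->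
  i1 != i0 -> NR_surjective_rho c ->
  forall F, NR_group_aut c F ->
  exists mu Fb, [/\ NR_central_aut c mu, NR_lie_group_aut c Fb & F = mu \o Fb].
Proof.
move=> G alt n10 surj F [[Fi FK KF] Fhom].
have cen := center_iff G alt n10.
have F0 : F 0 = 0.
  have := Fhom 0 0.
  have -> : gmul c 0 0 = 0 by rewrite /gmul /= rho0l scaler0 !addr0.
  move: (F 0) => -[a b]; rewrite /gmul /= => -[ea eb].
  have a0 : a = 0 by apply/eqP; rewrite -(addrI a (esym (etrans (addr0 a) ea))).
  rewrite a0 rho0l scaler0 addr0 in eb.
  have b0 : b = 0 by apply/eqP; rewrite -(addrI b (esym (etrans (addr0 b) eb))).
  by rewrite a0 b0.
have Fc : forall X, in_center c X -> in_center c (F X).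
  by move=> X hX H; rewrite -[H]KF -!Fhom hX.
have Fc' : forall X, in_center c (F X) -> in_center c X.
  by move=> X hX Y; apply: (can_inj FK); rewrite !Fhom hX.
pose B z := (F (0, z)).2.
pose A x := (F (x, 0)).1.
pose h x := (F (x, 0)).2.
have FB : forall z, F (0, z) = (0, B z).
  move=> z; have /cen e := Fc (0, z) ((cen (0, z)).2 erefl).
  by rewrite [LHS]surjective_pairing e.
have FX : forall x z, F (x, z) = (A x, h x + B z).
  move=> x z.
  have -> : (x, z) = gmul c (x, 0) (0, z) by rewrite /gmul /= rho0r scaler0 addr0 add0r addr0.
  by rewrite Fhom FB [F (x, 0)]surjective_pairing /gmul /= rho0r scaler0 !addr0.
have A0 : A 0 = 0 by rewrite /A (_ : (0, 0) = 0) // F0.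
have h0 : h 0 = 0 by rewrite /h (_ : (0, 0) = 0) // F0.
have B0 : B 0 = 0 by rewrite /B (_ : (0, 0) = 0) // F0.
have BD : forall z w, B (z + w) = B z + B w.
  move=> z w; have := Fhom (0, z) (0, w).
  rewrite /gmul /= rho0l scaler0 !addr0 !FB /= rho0l scaler0 !addr0.
  by case.
have BN : forall z, B (- z) = - B z.
  move=> z; apply/eqP; rewrite -subr_eq0 opprK -BD addNr B0 //.
have hE : forall x y, A (x + y) = A x + A y /\
   h (x + y) + B (2^-1 *: rho_wedge c x y) = h x + h y + 2^-1 *: rho_wedge c (A x) (A y).
  move=> x y; have := Fhom (x, 0) (y, 0).
  rewrite /gmul /= !FX /= B0 !addr0 ?add0r; case=> -> ->; split => //.

have AD : forall x y, A (x + y) = A x + A y by move=> x y; case: (hE x y).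
have KEY : forall x y, B (rho_wedge c x y) = rho_wedge c (A x) (A y).
  move=> x y; have [_ e1] := hE x y; have [_ e2] := hE y x.
  rewrite [y + x]addrC [h y + h x]addrC (rho_anti alt x y) (rho_anti alt (A x) (A y)) scalerN BN in e2.
  have -> : rho_wedge c x y = 2^-1 *: rho_wedge c x y + 2^-1 *: rho_wedge c x y by rewrite half2v.
  rewrite BD.
  apply/rowP => k; move: e1 e2 => /rowP /(_ k) e1 /rowP /(_ k) e2.
  rewrite !mxE in e1 e2; rewrite !mxE.
  lra.
have AN : forall x, A (- x) = - A x.
  move=> x; apply/eqP; rewrite -subr_eq0 opprK -AD addNr A0 //.
have Ainj0 : forall x, A x = 0 -> x = 0.
  move=> x Ax0.
  have : in_center c (F (x, 0)) by apply/cen; rewrite FX /= Ax0.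
  by move/Fc'/cen.
have Ainj : injective A.
  move=> x y e; apply/eqP; rewrite -subr_eq0; apply/eqP/Ainj0.
  by rewrite AD AN e subrr.
have Asurj : forall y, exists x, A x = y.
  move=> y; exists (Fi (y, 0)).1.
  have := KF (y, 0); rewrite [Fi (y, 0)]surjective_pairing FX.
  by case.
have Binj : injective B.
  move=> z w e; apply/eqP; rewrite -subr_eq0; apply/eqP.
  have e0 : B (z - w) = 0 by rewrite BD BN e subrr.
  have : F (0, z - w) = F 0 by rewrite FB e0 F0.
  by move/(can_inj FK) => -[].
have Bsurj : forall w, exists z, B z = w.
  move=> w; set X := Fi (0, w).
  have FXw : F X = (0, w) by rewrite /X KF.
  have : in_center c X by apply: Fc'; rewrite FXw; apply/cen.
  move/cen => X10; exists X.2.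
  by move: FXw; rewrite [X]surjective_pairing X10 FB => -[].
have [Ai AiK] := choice Asurj.
have [Bi BiK] := choice Bsurj.
have AiA : forall x, Ai (A x) = x by move=> x; apply: Ainj; rewrite AiK.
have BiB : forall z, Bi (B z) = z by move=> z; apply: Binj; rewrite BiK.
have AiD : forall x y, Ai (x + y) = Ai x + Ai y.
  by move=> x y; apply: Ainj; rewrite AD !AiK.
have Tex : forall t : RR, exists s : RR, forall x, A (t *: Ai x) = s *: x.
  move=> t.
  have Tsym : forall x y, rho_wedge c (A (t *: Ai x)) y = rho_wedge c x (A (t *: Ai y)).
    move=> x y; rewrite -{1}(AiK y) -KEY rhoZl -rhoZr KEY AiK //.
  apply: (good_scalar G) => //.
  - by move=> x y; rewrite AiD scalerDr AD.
  - move=> s x.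
    apply/eqP; rewrite -subr_eq0; apply/eqP.
    apply: (good_center G alt n10) => y.
    rewrite (_ : A (t *: Ai (s *: x)) - s *: A (t *: Ai x) = A (t *: Ai (s *: x)) + (- s) *: A (t *: Ai x)); last by rewrite scaleNr.
    by rewrite rhoDl rhoZl !Tsym rhoZl scaleNr subrr.
have [phi hphi] := choice Tex.
have AZ0 : forall t x, A (t *: x) = phi t *: A x.
  by move=> t x; rewrite -hphi AiA.
set e0 : 'rV[RR]_q := delta_mx 0 i0.
have v0 : A e0 != 0.
  apply/negP => /eqP /Ainj0 /rowP /(_ i0); rewrite !mxE !eqxx /=.
  by move/eqP; rewrite oner_eq0.
have phiid : forall t, phi t = t.
  apply: ringhom_id.
  - move=> s t; apply: (scal_inj v0).
    by rewrite -AZ0 scalerDl AD !AZ0 scalerDl.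
  - move=> s t; apply: (scal_inj v0).
    by rewrite -AZ0 -scalerA !AZ0 scalerA.
  - apply: (scal_inj v0); by rewrite -AZ0 !scale1r.
have AZ : forall (t : RR) x, A (t *: x) = t *: A x by move=> t x; rewrite AZ0 phiid.
have BZr : forall (t : RR) x y, B (t *: rho_wedge c x y) = t *: B (rho_wedge c x y).
  by move=> t x y; rewrite -rhoZl !KEY AZ rhoZl.
have BZ : forall (t : RR) z, B (t *: z) = t *: B z.
  move=> t z; have [a ->] := surj z.
  rewrite scaler_sumr !(big_morph B BD B0) scaler_sumr; apply: eq_bigr => i _.
  rewrite scaler_sumr !(big_morph B BD B0) scaler_sumr; apply: eq_bigr => j _.
  by rewrite -rho_ee scalerA !BZr scalerA.
have hD : forall x y, h (x + y) = h x + h y.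
  move=> x y; have [_ e1] := hE x y.
  rewrite BZr KEY in e1; by move/addIr: e1.
have AM := lin_mx_of AD AZ.
have BM := lin_mx_of BD BZ.
exists (fun X : Nsp p q => (X.1, X.2 + h (Ai X.1))), (fun X : Nsp p q => (A X.1, B X.2)).
split.
- split; last first.
    move=> [x z]; apply/cen => /=; by rewrite addNr.
  split.
    exists (fun X : Nsp p q => (X.1, X.2 - h (Ai X.1))).
      by move=> [x z] /=; rewrite addrK.
    by move=> [x z] /=; rewrite subrK.
  move=> [x z] [y w]; rewrite /gmul /= AiD hD; congr (_, _).
  apply/rowP => k; rewrite !mxE; lra.
- split; last first.
    have -> : (fun X : Nsp p q => (A X.1, B X.2)) =
      (fun X : Nsp p q => ((fun x => x *m (\matrix_(i, j) A (delta_mx 0 i) 0 j)) X.1,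
                          (fun z => z *m (\matrix_(i, j) B (delta_mx 0 i) 0 j)) X.2)).
      by apply: funext => -[x z] /=; rewrite -AM -BM.
    exact: (@pair_cont q p _ _ (@mulmx_cont q q _) (@mulmx_cont p p _)).
  split.
    exists (fun X : Nsp p q => (Ai X.1, Bi X.2)).
      by move=> [x z] /=; rewrite AiA BiB.
    by move=> [x z] /=; rewrite AiK BiK.
  move=> [x z] [y w]; rewrite /gmul /= AD !BD BZ KEY //.
- apply: funext => -[x z] /=; by rewrite FX AiA addrC.
Qed.
Definition minor (I J : finType) (E : I -> J -> RR) (g : 'I_#|I| -> J) : RR :=
  \det (\matrix_(a, b) E (enum_val a) (g b)).

Lemma sum_enum (I : finType) (F : I -> RR) :
  \sum_(i : I) F i = \sum_(a < #|I|) F (enum_val a).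
Proof. by rewrite (big_enum_val (A := I)) /=. Qed.

Lemma minorA (I J : finType) (E : I -> J -> RR) g : minor E g != 0 ->
  forall v : I -> RR, (forall j, \sum_(i : I) v i * E i j = 0) -> forall i, v i = 0.
Proof.
move=> d0 v hv; rewrite /minor in d0.
set M := \matrix_(a, b) E (enum_val a) (g b) in d0.
have Mu : M \in unitmx by rewrite unitmxE unitfE.
pose w : 'rV[RR]_#|I| := \row_a v (enum_val a).
have w0 : w *m M = 0.
  apply/rowP => b; rewrite !mxE -[RHS](hv (g b)) [RHS]sum_enum.
  by apply: eq_bigr => a _; rewrite !mxE.
have ww : w = 0 by rewrite -(mulmxK Mu w) w0 mul0mx.
move=> i; have := congr1 (fun M : 'rV[RR]_#|I| => M 0 (enum_rank i)) ww.
by rewrite !mxE enum_rankK.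
Qed.

Lemma minorB (I J : finType) (E : I -> J -> RR) :
  (forall v : I -> RR, (forall j, \sum_(i : I) v i * E i j = 0) -> forall i, v i = 0) ->
  exists g, minor E g != 0.
Proof.
move=> hE.
pose N : 'M[RR]_(#|I|, #|J|) := \matrix_(a, b) E (enum_val a) (enum_val b).
have fr : row_free N.
  apply: inj_row_free => w w0.
  pose v i := w 0 (enum_rank i).
  have v0 : forall i, v i = 0.
    apply: hE => j.
    have h := congr1 (fun M : 'rV[RR]_#|J| => M 0 (enum_rank j)) w0.
    rewrite /= !mxE in h; rewrite -[RHS]h [LHS]sum_enum.
    by apply: eq_bigr => a _; rewrite /v !mxE enum_valK enum_rankK.
  apply/rowP => a; rewrite mxE -(v0 (enum_val a)) /v enum_valK //.
have ff : row_full N^T by rewrite /row_full mxrank_tr.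
exists (fun a => enum_val (fullrankfun ff a)).
rewrite /minor -unitfE -unitmxE.
have e : (rowsub (fullrankfun ff) N^T)^T =
  \matrix_(a, b) E (enum_val a) (enum_val (fullrankfun ff b)).
  by apply/matrixP => a b; rewrite !mxE.
by rewrite -e unitmx_tr fullrowsub_unit.
Qed.
Lemma polyfun_ext p q (f g : Vcoef p q -> RR) :
  (forall c, f c = g c) -> polyfun f -> polyfun g.
Proof. by move=> e; rewrite (_ : f = g) //; apply: funext. Qed.

Lemma polyfun_opp p q (f : Vcoef p q -> RR) : polyfun f -> polyfun (fun c => - f c).
Proof.
move=> pf; apply: (polyfun_ext (f := fun c => (-1) * f c)); first by move=> c; rewrite mulN1r.
exact: pf_mul (pf_const _ _ _) pf.
Qed.

Lemma polyfun_sum p q (I : Type) (r : seq I) (P : pred I) (F : I -> Vcoef p q -> RR) :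
  (forall i, polyfun (F i)) -> polyfun (fun c => \sum_(i <- r | P i) F i c).
Proof.
move=> hF; elim: r => [|i r IH].
  by apply: (polyfun_ext (f := fun _ => 0)); [move=> c; rewrite big_nil | exact: pf_const].
case Pi: (P i).
  apply: (polyfun_ext (f := fun c => F i c + \sum_(j <- r | P j) F j c)).
    by move=> c; rewrite big_cons Pi.
  exact: pf_add.
apply: (polyfun_ext (f := fun c => \sum_(j <- r | P j) F j c)) => //.
by move=> c; rewrite big_cons Pi.
Qed.

Lemma polyfun_prod p q (I : Type) (r : seq I) (P : pred I) (F : I -> Vcoef p q -> RR) :
  (forall i, polyfun (F i)) -> polyfun (fun c => \prod_(i <- r | P i) F i c).
Proof.
move=> hF; elim: r => [|i r IH].
  by apply: (polyfun_ext (f := fun _ => 1)); [move=> c; rewrite big_nil | exact: pf_const].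
case Pi: (P i).
  apply: (polyfun_ext (f := fun c => F i c * \prod_(j <- r | P j) F j c)).
    by move=> c; rewrite big_cons Pi.
  exact: pf_mul.
apply: (polyfun_ext (f := fun c => \prod_(j <- r | P j) F j c)) => //.
by move=> c; rewrite big_cons Pi.
Qed.

Lemma polyfun_det p q n (M : Vcoef p q -> 'M[RR]_n) :
  (forall i j, polyfun (fun c => M c i j)) -> polyfun (fun c => \det (M c)).
Proof.
move=> hM; rewrite /determinant.
apply: polyfun_sum => s; apply: pf_mul; first exact: pf_const.
by apply: polyfun_prod => i; apply: hM.
Qed.

Lemma polyfun_Eqc p q (i0 : 'I_q) ab J : polyfun (fun c : Vcoef p q => Eqc i0 c ab J).
Proof.
case: J => [[[i j] k]|] /=; last by case: (ab == (i0, i0)); exact: pf_const.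
apply: pf_add.
  by case: (ab.1 == i) => /=; [exact: pf_coord | exact: pf_const].
apply: polyfun_opp.
by case: (ab.1 == j) => /=; [exact: pf_coord | exact: pf_const].
Qed.

Lemma polyfun_minor p q (i0 : 'I_q) g : polyfun (fun c : Vcoef p q => minor (Eqc i0 c) g).
Proof.
rewrite /minor; apply: (polyfun_det (M := fun c => \matrix_(a, b) Eqc i0 c (enum_val a) (g b))).
move=> a b; apply: (polyfun_ext (f := fun c => Eqc i0 c (enum_val a) (g b))).
  by move=> c; rewrite mxE.
exact: polyfun_Eqc.
Qed.

Definition vline p q (c c0 : Vcoef p q) (t : RR) : Vcoef p q :=
  fun i j => (1 - t) *: c i j + t *: c0 i j.

Lemma polyfun_line p q (f : Vcoef p q -> RR) : polyfun f ->
  forall c c0, exists P : {poly RR}, forall t, P.[t] = f (vline c c0 t).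
Proof.
move=> pf c c0; elim: pf => {f}.
- by move=> a; exists a%:P => t; rewrite hornerC.
- move=> i j k; exists ((c i j 0 k)%:P + 'X * (c0 i j 0 k - c i j 0 k)%:P) => t.
  rewrite /vline !hornerE !mxE; ring.
- move=> f g _ [P hP] _ [Q hQ]; exists (P + Q) => t; by rewrite hornerD hP hQ.
- move=> f g _ [P hP] _ [Q hQ]; exists (P * Q) => t; by rewrite hornerM hP hQ.
Qed.

Lemma poly_all0 (P : {poly RR}) : (forall t, P.[t] = 0) -> P = 0.
Proof.
move=> h; apply/eqP; apply/negPn/negP => P0.
set rs := [seq i%:R | i <- iota 0 (size P)] : seq RR.
have ha : all (root P) rs by apply/allP => x /mapP [i _ ->]; rewrite /root h.
have hu : uniq rs.
  by rewrite map_inj_uniq ?iota_uniq // => m n /eqP; rewrite eqr_nat => /eqP.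
by have := max_poly_roots P0 ha hu; rewrite size_map size_iota ltnn.
Qed.

Lemma dense_of p q (d : Vcoef p q -> RR) (O : Vcoef p q -> Prop) (c0 : Vcoef p q) :
  polyfun d -> NR_alternating c0 -> d c0 != 0 ->
  (forall c, NR_alternating c -> d c != 0 -> O c) -> NR_zariski_dense O.
Proof.
move=> pd alt0 d0 hO Z [S [Spf hZ]] OZ c altc.
apply/(hZ c altc) => f Sf.
have altl : forall t, NR_alternating (vline c c0 t).
  by move=> t i j; rewrite /vline altc alt0 !scalerN opprD.
have [Pf hPf] := polyfun_line (Spf f Sf) c c0.
have [Pd hPd] := polyfun_line pd c c0.
have e0 : vline c c0 0 = c.
  by apply: funext => i; apply: funext => j; rewrite /vline subr0 scale1r scale0r addr0.
have e1 : vline c c0 1 = c0.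
  by apply: funext => i; apply: funext => j; rewrite /vline subrr scale1r scale0r add0r.
have PM : Pf * Pd = 0.
  apply: poly_all0 => t; rewrite hornerM hPf hPd.
  have [->|dn] := eqVneq (d (vline c c0 t)) 0; first by rewrite mulr0.
  have := (hZ _ (altl t)).1 (OZ _ (altl t) (hO _ (altl t) dn)) f Sf.
  by move=> ->; rewrite mul0r.
have Pd0 : Pd != 0 by apply/eqP => Pd0; move: d0; rewrite -e1 -hPd Pd0 horner0 eqxx.
move/eqP: PM; rewrite mulf_eq0 (negbTE Pd0) orbF => /eqP Pf0.
by rewrite -e0 -hPf Pf0 horner0.
Qed.
Lemma eq_some p q (i0 : 'I_q) (c : Vcoef p q) (v : 'I_q * 'I_q -> RR) i j k :
  \sum_(ab : 'I_q * 'I_q) v ab * Eqc i0 c ab (Some (i, j, k)) =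
  (rho_wedge c (\row_b v (i, b)) (delta_mx 0 j) - rho_wedge c (delta_mx 0 i) (\row_b v (j, b))) 0 k.
Proof.
rewrite /= rho_er rho_el !mxE !summxE.
under eq_bigr => ab _ do rewrite mulrBr.
rewrite sumrB.
have e1 : forall (i1 : 'I_q) (X : 'I_q -> RR), \sum_(ab : 'I_q * 'I_q) v ab * (if ab.1 == i1 then X ab.2 else 0) = \sum_(b < q) v (i1, b) * X b.
  move=> i1 X; rewrite -(sum_pick i1 (fun a b => v (a, b) * X b)).
  apply: eq_bigr => -[a b] _ /=; case: eqP => _; by rewrite ?mulr0.
rewrite (e1 i (fun b => c b j 0 k)) (e1 j (fun b => c i b 0 k)).
congr (_ - _); apply: eq_bigr => b _; by rewrite !mxE.
Qed.

Lemma good_of p q (i0 : 'I_q) (c : Vcoef p q) :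
  (forall T : 'I_q -> 'rV[RR]_q,
     (forall i j, rho_wedge c (T i) (delta_mx 0 j) = rho_wedge c (delta_mx 0 i) (T j)) ->
     T i0 0 i0 = 0 -> forall a b, T a 0 b = 0) -> Good i0 c.
Proof.
move=> H v hv [a b].
suff : (\row_b0 v (a, b0)) 0 b = 0 by rewrite mxE.
apply: (H (fun a => \row_b v (a, b))).
- move=> i j; apply/eqP; rewrite -subr_eq0; apply/eqP/rowP => k.
  by rewrite -(eq_some i0) hv mxE.
- rewrite mxE; have := hv None.
  rewrite (bigD1 (i0, i0)) //= big1 ?addr0; first by rewrite eqxx mulr1.
  by move=> ab /negbTE ->; rewrite mulr0.
Qed.
Definition cstar p q (i0 : 'I_q) : Vcoef p q := fun a b =>
  \row_(k < p) (((a == i0) && (val b == k.+1))%:R - ((b == i0) && (val a == k.+1))%:R : RR).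

Lemma cstar_alt p q (i0 : 'I_q) : NR_alternating (cstar p i0).
Proof. by move=> i j; apply/rowP => k; rewrite !mxE opprB. Qed.

Lemma sum_eq1 (T : finType) (F : T -> RR) (t0 : T) :
  \sum_(t : T) F t * (t == t0)%:R = F t0.
Proof.
rewrite (bigD1 t0) //= eqxx mulr1 big1 ?addr0 //.
by move=> t /negbTE ->; rewrite mulr0.
Qed.

Lemma rho_star p q (i0 : 'I_q) x y (k : 'I_p) (kk : 'I_q) : val kk = k.+1 ->
  (rho_wedge (cstar p i0) x y) 0 k = x 0 i0 * y 0 kk - x 0 kk * y 0 i0.
Proof.
move=> hk; rewrite /rho_wedge summxE.
under eq_bigr => a _ do rewrite summxE.
rewrite pair_big /=.
rewrite (eq_bigr (fun ab : 'I_q * 'I_q => x 0 ab.1 * y 0 ab.2 * (ab == (i0, kk))%:R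
                      - x 0 ab.1 * y 0 ab.2 * (ab == (kk, i0))%:R)).
  by rewrite sumrB !(sum_eq1 (fun ab : 'I_q * 'I_q => x 0 ab.1 * y 0 ab.2)).
move=> [a b] _; rewrite !mxE /= -mulrBr -hk.
by rewrite !xpair_eqE [(a == kk) && _]andbC.
Qed.
Lemma pred_ord (p q : nat) (i0 : 'I_q) : val i0 = 0%N -> leq q.-1 p ->
  forall b : 'I_q, b != i0 -> exists k : 'I_p, val b = k.+1.
Proof.
move=> hi0 hq b nb.
have b0 : (0 < val b)%nat.
  rewrite lt0n; apply/negP => /eqP e; move/negP: nb; apply; apply/eqP/val_inj.
  by rewrite /= e hi0.
have hb : (val b < q)%nat by exact: ltn_ord.
move: b0 hb; set n := val b => b0 hb.
have kp : ((val b).-1 < p)%nat by lia.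
by exists (Ordinal kp) => /=; rewrite prednK.
Qed.

Lemma good_star (p q : nat) (i0 : 'I_q) : val i0 = 0%N -> leq q.-1 p -> Good i0 (cstar p i0).
Proof.
move=> hi0 hq; apply: good_of => T sym T00.
have S : forall i j (k : 'I_p) (kk : 'I_q), val kk = k.+1 ->
   T i 0 i0 * (delta_mx 0 j : 'rV[RR]_q) 0 kk - T i 0 kk * (delta_mx 0 j : 'rV[RR]_q) 0 i0
   = (delta_mx 0 i : 'rV[RR]_q) 0 i0 * T j 0 kk - (delta_mx 0 i : 'rV[RR]_q) 0 kk * T j 0 i0.
  move=> i j k kk hk.
  by rewrite -!(rho_star i0 _ _ hk) sym.
have P := pred_ord hi0 hq.
move=> a b.
have [ea|na] := eqVneq a i0; have [eb|nb] := eqVneq b i0.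
- by rewrite ea eb.
- have [k hk] := P b nb.
  have nb2 : (i0 == b) = false by rewrite eq_sym (negbTE nb).
  have := S i0 i0 k b hk; rewrite !mxE !eqxx /= ?(negbTE nb) ?nb2 /= ea.
  move=> h; lra.
- have [k hk] := P a na.
  have na2 : (i0 == a) = false by rewrite eq_sym (negbTE na).
  have := S a a k a hk; rewrite !mxE !eqxx /= ?(negbTE na) ?na2 /= eb.
  move=> h; lra.
- have [k hk] := P a na.
  have na2 : (i0 == a) = false by rewrite eq_sym (negbTE na).
  have nb2 : (i0 == b) = false by rewrite eq_sym (negbTE nb).
  have [eab|nab] := eqVneq a b.
    have := S a i0 k a hk; rewrite !mxE !eqxx /= ?(negbTE na) ?na2 /= T00 -eab.
    move=> h; lra.
  have nab2 : (b == a) = false by rewrite eq_sym (negbTE nab).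
  have [k' hk'] := P b nb.
  have := S a i0 k' b hk'; rewrite !mxE !eqxx /= ?(negbTE nb) ?(negbTE na) ?(negbTE nab) ?na2 ?nb2 ?nab2 /= T00.
  move=> h; lra.
Qed.
Lemma field_id p q (c : Vcoef p q) : NR_field_aut c (fun X : Nsp p q => X).
Proof.
exists 1%N, (fun _ _ => True), (fun _ (X : Nsp p q) => X); split.
- by move=> i; split.
- move=> X; exists (fun _ => X); split.
    by split => //; rewrite big_ord1.
  move=> Xs [_ ->]; apply: funext => i.
  by rewrite big_ord1 (ord1 i).
- by move=> i; left.
- by [].
Qed.

Definition Ogood p q (i0 : 'I_q) (c : Vcoef p q) : Prop :=
  exists g, minor (Eqc i0 c) g != 0.

Local Close Scope ring_scope.

Theorem theorem3p3 (p q : nat) :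
  (1 <= p) -> (2 <= q) -> (q.-1 <= p) -> (p.*2 <= q * q.-1) ->
  exists O : Vcoef p q -> Prop,
    [/\ NR_zariski_open O, NR_zariski_dense O &
        forall c : Vcoef p q, NR_alternating c -> O c -> NR_surjective_rho c ->
          NR_partial_automatic_continuity c /\
          (forall F, NR_group_aut c F ->
             exists mu Fb, [/\ NR_central_aut c mu, NR_lie_group_aut c Fb &
                               F = mu \o Fb])].
Proof.
move=> hp hq hq1 hq2.
have q0 : 0 < q by lia.
have q1 : 1 < q by lia.
pose i0 : 'I_q := Ordinal q0.
pose i1 : 'I_q := Ordinal q1.
have n10 : i1 != i0 by [].
have hi0 : val i0 = 0 by [].
exists (Ogood i0); split.
- exists (fun f => exists g, f = fun c => minor (Eqc i0 c) g); split.
    by move=> f [g ->]; exact: polyfun_minor.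
  move=> c _; split.
    move=> nO f [g ->]; apply/eqP; apply/negPn/negP => h; apply: nO; by exists g.
  move=> H [g hg]; move/eqP: hg; apply; apply: (H (fun c => minor (Eqc i0 c) g)); by exists g.
- have [g0 hg0] := minorB (good_star hi0 hq1).
  apply: (dense_of (d := fun c => minor (Eqc i0 c) g0) (c0 := cstar p i0)).
  + exact: polyfun_minor.
  + exact: cstar_alt.
  + exact: hg0.
  + by move=> c _ h; exists g0.
- move=> c alt [g hg] surj.
  have G : Good i0 c := minorA hg.
  have D := aut_decomp G alt n10 surj.
  split => //.
  move=> F hF; have [mu [Fb [h1 h2 h3]]] := D F hF.
  exists mu, Fb, (fun X : Nsp p q => X); split => //; first exact: field_id.
Qed.
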